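(* Let $\mathcal{C}$ be a chordal $d$-uniform clutter on $[n]$ and let $\mathbf{e}$ and $\mathbf{e}'$ be two simplicial orders of $\mathcal{C}$. Then the simplicial multisets associated with $\mathbf{e}$ and $\mathbf{e}'$ coincide. In particular, all simplicial orders of $\mathcal{C}$ have the same length.
   Context: A $d$-uniform clutter $\mathcal{C}$ on $[n]$ is a set of $d$-element subsets of $[n]$. A $(d-1)$-subset $e$ is a submaximal circuit of $\mathcal{C}$ if $e\subset F$ for some $F\in\mathcal{C}$. A subset $V\subseteq[n]$ is a clique of $\mathcal{C}$ if every $d$-subset of $V$ belongs to $\mathcal{C}$. For a $(d-1)$-subset $e$, $\mathrm{N}_{\mathcal{C}}(e)=\{c\in[n]: e\cup\{c\}\in\mathcal{C}\}$ and $\mathrm{N}_{\mathcal{C}}[e]=e\cup\mathrm{N}_{\mathcal{C}}(e)$; $e$ is simplicial in $\mathcal{C}$ if it is a submaximal circuit and $\mathrm{N}_{\mathcal{C}}[e]$ is a clique. Deletion: $\mathcal{C}\setminus e=\{F\in\mathcal{C}: e\not\subset F\}$; $\mathcal{C}_{e_1\cdots e_i}$ denotes successive deletion of $e_1,\ldots,e_i$. A simplicial order of $\mathcal{C}$ is a sequence $e_1,\ldots,e_r$ with $e_1$ simplicial in $\mathcal{C}$, $e_i$ simplicial in $\mathcal{C}_{e_1\cdots e_{i-1}}$ for $i>1$, and $\mathcal{C}_{e_1\cdots e_r}=\emptyset$; $\mathcal{C}$ is chordal if it has a simplicial order. The simplicial multiset of the order is the multiset $\{N_1,\ldots,N_r\}$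 with $N_1=|\mathrm{N}_{\mathcal{C}}(e_1)|$, $N_i=|\mathrm{N}_{\mathcal{C}_{e_1\cdots e_{i-1}}}(e_i)|$ for $i>1$. *)

(* Defs.v *)
From mathcomp Require Import all_boot.
Set Implicit Arguments. Unset Strict Implicit. Unset Printing Implicit Defensive.

Section Clutter.
Variable n : nat.
Notation V := 'I_n.

Definition uniform_clutter (d : nat) (C : {set {set V}}) : Prop :=
  forall F, F \in C -> #|F| = d.

Definition submaximal (d : nat) (C : {set {set V}}) (e : {set V}) : bool :=
  (#|e| == d.-1) && [exists F in C, e \subset F].

Definition clique (d : nat) (C : {set {set V}}) (W : {set V}) : bool :=
  [forall S : {set V}, ((S \subset W) && (#|S| == d)) ==> (S \in C)].

Definition nbh (C : {set {set V}}) (e : {set V}) : {set V} :=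
  [set c | (c |: e) \in C].
Definition cnbh (C : {set {set V}}) (e : {set V}) : {set V} := e :|: nbh C e.

Definition simplicial (d : nat) (C : {set {set V}}) (e : {set V}) : bool :=
  submaximal d C e && clique d C (cnbh C e).

Definition del (C : {set {set V}}) (e : {set V}) : {set {set V}} :=
  [set F in C | ~~ (e \subset F)].

Fixpoint simplicial_order (d : nat) (C : {set {set V}}) (es : seq {set V}) : bool :=
  match es with
  | [::] => C == set0
  | e :: es' => simplicial d C e && simplicial_order d (del C e) es'
  end.

Definition chordal (d : nat) (C : {set {set V}}) : Prop :=
  exists es, simplicial_order d C es.

(* the simplicial multiset [N_1; ...; N_r] (as a list, compared up to perm_eq) *)
Fixpoint simplicial_multiset (C : {set {set V}}) (es : seq {set V}) : seq nat :=
  match es with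
  | [::] => [::]
  | e :: es' => #|nbh C e| :: simplicial_multiset (del C e) es'
  end.

End Clutter.

(* Main.v *)
Require Import Defs.
From mathcomp Require Import all_boot zify.
Set Implicit Arguments. Unset Strict Implicit. Unset Printing Implicit Defensive.

Lemma cliqueP n d (C : {set {set 'I_n}}) (W : {set 'I_n}) :
  reflect (forall S : {set 'I_n}, S \subset W -> #|S| = d -> S \in C) (clique d C W).
Proof.
apply: (iffP forallP) => [H S sSW cS | H S].
  by have := H S; rewrite sSW cS eqxx /=.
by apply/implyP => /andP[sSW /eqP cS]; apply: H.
Qed.

Definition K n d (C : {set {set 'I_n}}) i :=
  #|[set W : {set 'I_n} | (#|W| == d.-1 + i) && clique d C W]|.

Lemma step n d (C : {set {set 'I_n}}) e i : 0 < d -> 0 < i ->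
  uniform_clutter d C -> simplicial d C e ->
  K d C i = 'C(#|nbh C e|, i) + K d (del C e) i.
Proof.
move=> d0 i0 hU /andP[/andP[/eqP he _] /cliqueP hcl].
have card1 c : c \notin e -> #|c |: e| = d.
  by move=> ce; rewrite cardsU1 ce he add1n prednK.
have hN c : c \in nbh C e -> c \notin e.
  rewrite inE => /hU hc; apply/negP => ce; move: hc.
  by rewrite (setUidPr _) ?sub1set // he; case: (d) d0 => // d' _ /= /eqP; rewrite eqn_leq ltnn andbF.
set A := [set W : {set 'I_n} | (#|W| == d.-1 + i) && clique d C W].
set E := [set W : {set 'I_n} | e \subset W].
set D := [set S : {set 'I_n} | S \subset nbh C e & #|S| == i].
have hB : [set W : {set 'I_n} | (#|W| == d.-1 + i) && clique d (del C e) W] = A :\: E.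
  apply/setP => W; rewrite !inE; apply/idP/idP.
  - case/andP => /eqP cW0 /cliqueP hW /=; rewrite cW0 eqxx /=; apply/andP; split; last first.
      by apply/cliqueP => S sS cS; have := hW S sS cS; rewrite inE => /andP[].
    apply/negP => eW.
    have : 0 < #|W :\: e|.
      by rewrite cardsD (setIidPr eW) he cW0 addKn.
    case/card_gt0P => x; rewrite inE => /andP[ce cW].
    have := hW (x |: e) _ (card1 _ ce); rewrite inE subsetUr andbF.
    by rewrite subUset sub1set cW eW; move/(_ isT).
  - case/and3P => eW -> /cliqueP hW; apply/cliqueP => S sS cS.
    rewrite inE hW //=; apply: contra eW => eS; exact: subset_trans sS.
have hAE : A :&: E = [set e :|: S | S in D].
  apply/setP => W; rewrite !inE; apply/idP/imsetP.
  - case/andP => /andP[/eqP cW /cliqueP hW] eW; exists (W :\: e).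
      rewrite inE; apply/andP; split.
        apply/subsetP => x; rewrite inE => /andP[xe xW]; rewrite inE.
        by apply: hW; [rewrite subUset sub1set xW eW | exact: card1].
      by rewrite cardsD (setIidPr eW) cW he addKn.
    by rewrite -{1}(setID W e) (setIidPr eW).
  - case=> S; rewrite inE => /andP[sN /eqP cS] ->.
    have eS0 : e :&: S = set0.
      apply/setP => x; rewrite !inE; apply/negP => /andP[xe xS].
      by rewrite (negPf (hN x (subsetP sN x xS))) in xe.
    rewrite cardsU eS0 cards0 subn0 he cS eqxx /= subsetUl andbT.
    apply/cliqueP => T sT cT; apply: hcl => //; apply: subset_trans sT _.
    by rewrite /cnbh setUS.
have k (S : {set 'I_n}) : S \subset nbh C e -> S = (e :|: S) :\: e.
  move=> sN; apply/setP => x; rewrite !inE; case xS: (x \in S); last by rewrite orbF andNb.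
  by rewrite orbT andbT (hN _ (subsetP sN _ xS)).
rewrite /K hB -(cardsID E A) hAE card_in_imset ?cards_draws //.
move=> S1 S2; rewrite !inE => /andP[s1 _] /andP[s2 _] h.
by rewrite (k _ s1) (k _ s2) h.
Qed.

Lemma uniform_del n d (C : {set {set 'I_n}}) e :
  uniform_clutter d C -> uniform_clutter d (del C e).
Proof. by move=> hU F; rewrite inE => /andP[/hU]. Qed.

Lemma sum_inv n d (C : {set {set 'I_n}}) es i : 0 < d -> 0 < i ->
  uniform_clutter d C -> simplicial_order d C es ->
  \sum_(x <- simplicial_multiset C es) 'C(x, i) + K d (set0 : {set {set 'I_n}}) i = K d C i.
Proof.
move=> d0 i0; elim: es C => [|e es IH] C hU /=.
  by move/eqP => ->; rewrite big_nil.
case/andP => hs ho; rewrite big_cons -addnA IH //; last exact: uniform_del.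
by rewrite (step d0 i0 hU hs).
Qed.

Lemma pos_ms n d (C : {set {set 'I_n}}) es : 0 < d ->
  uniform_clutter d C -> simplicial_order d C es ->
  forall x, x \in simplicial_multiset C es -> 0 < x.
Proof.
move=> d0; elim: es C => [|e es IH] C hU //=.
rewrite /simplicial /submaximal; case/andP => /andP[/andP[/eqP he /existsP[F /andP[FC eF]]] _] ho x.
rewrite inE => /orP[/eqP ->|]; last by apply: IH => //; exact: uniform_del.
have : 0 < #|F :\: e|.
  by rewrite cardsD (setIidPr eF) (hU _ FC) he; case: (d) d0 => // d' _; rewrite subSnn.
case/card_gt0P => c; rewrite inE => /andP[ce cF].
apply/card_gt0P; exists c; rewrite inE.
have -> : c |: e = F.
  apply/eqP; rewrite eqEcard subUset sub1set cF eF /= cardsU1 ce he (hU _ FC).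
  by case: (d) d0.
by [].
Qed.

Lemma max_seq (s : seq nat) : s != [::] -> exists2 M, M \in s & forall x, x \in s -> x <= M.
Proof.
elim: s => [|a s IH] // _.
case: (eqVneq s [::]) => [->|/IH [M Ms hM]].
  by exists a; rewrite ?inE // => x; rewrite inE => /eqP ->.
case: (leqP M a) => hMa.
  exists a; first by rewrite inE eqxx.
  by move=> x; rewrite inE => /orP[/eqP ->//|/hM /leq_trans]; apply.
exists M; first by rewrite inE Ms orbT.
by move=> x; rewrite inE => /orP[/eqP ->|/hM//]; apply: ltnW.
Qed.

Lemma mem_transfer (s t : seq nat) M : 0 < M -> M \in s -> (forall x, x \in t -> x <= M) ->
  \sum_(x <- s) 'C(x, M) = \sum_(x <- t) 'C(x, M) -> M \in t.
Proof.
move=> M0 Ms hM; rewrite (big_rem _ Ms) binn.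
move=> h; apply/negPn/negP => Mt; move: h; rewrite [X in _ = X]big1_seq //.
move=> x /andP[_ xt]; apply: bin_small; rewrite ltn_neqAle hM // andbT.
by apply: contraNneq Mt => <-.
Qed.

Lemma recover (s t : seq nat) : (forall x, x \in s -> 0 < x) -> (forall x, x \in t -> 0 < x) ->
  (forall i, 0 < i -> \sum_(x <- s) 'C(x, i) = \sum_(x <- t) 'C(x, i)) -> perm_eq s t.
Proof.
move: {2}(size s + size t) (leqnn (size s + size t)) => m.
elim: m s t => [|m IH] s t.
  by case: s => //; case: t.
move=> hsz hs ht hsum.
case: (eqVneq (s ++ t) [::]) => [|/max_seq [M Mst hM]].
  by case: s {hsz hs hsum} => // /= ->.
have M0 : 0 < M by move: Mst; rewrite mem_cat => /orP[/hs|/ht].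
have [Ms Mt] : M \in s /\ M \in t.
  move: Mst; rewrite mem_cat => /orP[Ms|Mt]; split => //.
  - apply: (mem_transfer M0 Ms) (hsum _ M0) => x xt; apply: hM; by rewrite mem_cat xt orbT.
  - apply: (mem_transfer M0 Mt) (esym (hsum _ M0)) => x xs; apply: hM; by rewrite mem_cat xs.
apply: (perm_trans (perm_to_rem Ms)); rewrite perm_sym.
apply: (perm_trans (perm_to_rem Mt)); rewrite perm_sym perm_cons.
apply: IH.
- have s0 : 0 < size s by move: Ms; case: (s).
  have t0 : 0 < size t by move: Mt; case: (t).
  by move: hsz; rewrite !size_rem //; case: (size s) s0 => // a _; case: (size t) t0 => // b _ /=; rewrite addSn ltnS addnS => /ltnW.
- by move=> x /mem_rem /hs.
- by move=> x /mem_rem /ht.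
move=> i i0; apply/eqP; rewrite -(eqn_add2l 'C(M, i)).
by have := hsum _ i0; rewrite (big_rem _ Ms) (big_rem _ Mt) => ->.
Qed.

Theorem corollary2p2 (n d : nat) (C : {set {set 'I_n}}) (es es' : seq {set 'I_n}) :
  0 < d ->
  uniform_clutter d C ->
  chordal d C ->
  simplicial_order d C es ->
  simplicial_order d C es' ->
  perm_eq (simplicial_multiset C es) (simplicial_multiset C es') /\
  size es = size es'.
Proof.
move=> d0 hU _ ho ho'.
have hp : perm_eq (simplicial_multiset C es) (simplicial_multiset C es').
  apply: recover; [exact: pos_ms ho | exact: pos_ms ho' |] => i i0.
  apply/eqP; rewrite -(eqn_add2r (K d (set0 : {set {set 'I_n}}) i)).
  by rewrite (sum_inv d0 i0 hU ho) (sum_inv d0 i0 hU ho').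
split=> //.
have sz (C0 : {set {set 'I_n}}) s : size (simplicial_multiset C0 s) = size s.
  by elim: s C0 => // a s IH C0 /=; rewrite IH.
by rewrite -(sz C es) -(sz C es'); apply: perm_size.
Qed.
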